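(* Let $K$ be a compact Hausdorff scattered space of finite height and let $K^{(n)}$ denote its $n$-th Cantor--Bendixson derivative (with $K^{(0)}=K$). If for every $n$ the set $K^{(n+1)}$ admits an extension operator in $K^{(n)}$, then $K$ has the extension property.
   Context: $K^{(n+1)}$ is the set of non-isolated points of $K^{(n)}$; finite height means $K^{(n)}=\emptyset$ for some finite $n$. $C(K)$ is the Banach space of real-valued continuous functions on $K$ with the supremum norm. For compact $A$ and closed $F\subseteq A$, an extension operator for $F$ in $A$ is a bounded linear map $E:C(F)\to C(A)$ with $E(f)|_F=f$ for all $f\in C(F)$. A compact space has the extension property if every nonempty closed subset admits an extension operator in it. *)

(* Defs.v *)
From mathcomp Require Import all_boot all_order all_algebra.
From mathcomp Require Import all_classical all_reals all_analysis.
Set Implicit Arguments. Unset Strict Implicit. Unset Printing Implicit Defensive.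
Import Order.TTheory GRing.Theory Num.Theory.
Import numFieldNormedType.Exports.
Local Open Scope classical_set_scope.
Local Open Scope ring_scope.

Definition isolated_in {T : topologicalType} (S : set T) (x : T) : Prop :=
  S x /\ exists U : set T, open U /\ U `&` S = [set x].

Fixpoint CB_deriv {T : topologicalType} (n : nat) : set T :=
  match n with
  | O => setT
  | S m => [set x | CB_deriv m x /\ ~ isolated_in (CB_deriv m) x]
  end.

Definition scattered (T : topologicalType) : Prop :=
  forall S : set T, S !=set0 -> exists x, isolated_in S x.

Definition finite_height (T : topologicalType) : Prop :=
  exists n : nat, @CB_deriv T n = set0.

Definition cont_on {R : realType} {T : topologicalType} (F : set T) (f : T -> R) : Prop :=
  {within F, continuous f}.

(* An extension operator for F in A, E : C(F) -> C(A).  Elements of C(F) are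
   represented by functions T -> R continuous on F (only their values on F
   matter); elements of C(A) by functions continuous on A (only their values on
   A matter). *)
Definition extension_operator {R : realType} {T : topologicalType}
    (F A : set T) (E : (T -> R) -> (T -> R)) : Prop :=
  [/\ (forall f g : T -> R, cont_on F f -> cont_on F g ->
         (forall y, F y -> f y = g y) -> forall x, A x -> E f x = E g x),
      (forall f : T -> R, cont_on F f -> cont_on A (E f)),
      (forall (a : R) (f g : T -> R),
         cont_on F f -> cont_on F g ->
         forall x, A x -> E (fun y => a * f y + g y) x = a * E f x + E g x),
      (exists M : R, forall f : T -> R, cont_on F f ->
         forall c : R, 0 <= c -> (forall y, F y -> `|f y| <= c) ->
         forall x, A x -> `|E f x| <= M * c)
    & (forall f : T -> R, cont_on F f -> forall x, F x -> E f x = f x)].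

Definition has_extension_operator (R : realType) {T : topologicalType}
    (F A : set T) : Prop :=
  exists E : (T -> R) -> (T -> R), extension_operator F A E.

Definition extension_property (R : realType) (T : topologicalType) : Prop :=
  forall F : set T, closed F -> F !=set0 -> has_extension_operator R F setT.

(* Main.v *)
Require Import Defs.
From mathcomp Require Import all_boot all_order all_algebra.
From mathcomp Require Import all_classical all_reals all_analysis.
Set Implicit Arguments. Unset Strict Implicit. Unset Printing Implicit Defensive.
Import Order.TTheory GRing.Theory Num.Theory.
Import numFieldNormedType.Exports.
Local Open Scope classical_set_scope.
Local Open Scope ring_scope.

Section S.
Variables (R : realType) (T : topologicalType).

Lemma CB_sub n : @CB_deriv T n.+1 `<=` CB_deriv n.
Proof. by move=> x []. Qed.

Lemma CB_closed n : closed (@CB_deriv T n).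
Proof.
elim: n => [|n IH]; first exact: closedT.
move=> x clx; have [//|nx] := pselect (CB_deriv n.+1 x).
have [Dx|nDx] := pselect (CB_deriv n x); last first.
  have : nbhs x (~` CB_deriv n) by apply: open_nbhs_nbhs; split => //; exact: closed_openC.
  move=> /clx [y [Dy nDy]]; by case: nDy; case: Dy.
have iso : isolated_in (CB_deriv n) x.
  by apply: contrapT => ni; apply: nx; split.
case: iso => _ [U [oU eU]].
have Ux : U x by have : [set x] x by []; rewrite -eU => -[].
have : nbhs x U by apply: open_nbhs_nbhs.
move=> /clx [y [Dy1 Uy]].
have : (U `&` CB_deriv n) y by split => //; case: Dy1.
by rewrite eU => yx; rewrite -yx.
Qed.
Lemma cont_onP (A : set T) (f : T -> R) :
  cont_on A f <-> (forall x, A x -> forall V, nbhs (f x) V ->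
      nbhs x (fun y => A y -> V (f y))).
Proof.
rewrite /cont_on /from_subspace subspace_continuousP; split.
- by move=> H x Ax V nV; exact: (H x Ax V nV).
- by move=> H x Ax V nV; exact: (H x Ax V nV).
Qed.

Lemma cont_on_lin (A : set T) (a : R) (f g : T -> R) :
  cont_on A f -> cont_on A g -> cont_on A (fun y => a * f y + g y).
Proof.
move=> cf cg x; apply: cvgD; last exact: cg.
by apply: cvgM; [exact: cvg_cst | exact: cf].
Qed.

Lemma ext_nonneg (F A : set T) (E : (T -> R) -> (T -> R)) :
  extension_operator F A E -> exists M : R, 0 <= M /\ (forall f : T -> R, cont_on F f ->
         forall c : R, 0 <= c -> (forall y, F y -> `|f y| <= c) ->
         forall x, A x -> `|E f x| <= M * c).
Proof.
case=> _ _ _ [M HM] _; exists (Num.max M 0); split; first by rewrite le_max lexx orbT.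
move=> f cf c c0 hc x Ax; apply: le_trans (HM f cf c c0 hc x Ax) _.
by rewrite ler_wpM2r // le_max lexx.
Qed.

Lemma ext_id (A : set T) : @extension_operator R T A A (fun f => f).
Proof.
split => //; try by move=> f g _ _ e x Ax; exact: e.
by exists 1 => f _ c _ hc x Ax; rewrite mul1r; exact: hc.
Qed.

Lemma ext_comp (F A B : set T) (E E' : (T -> R) -> (T -> R)) :
  F `<=` A -> extension_operator F A E -> extension_operator A B E' ->
  extension_operator F B (fun f => E' (E f)).
Proof.
move=> FA hE hE'; have [M [M0 HM]] := ext_nonneg hE.
have [M' [M'0 HM']] := ext_nonneg hE'.
case: hE => wd cE lE _ rE; case: hE' => wd' cE' lE' _ rE'.
split.
- move=> f g cf cg e x Bx; apply: wd' => //; [exact: cE|exact: cE|].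
  by move=> y Ay; exact: wd.
- by move=> f cf; apply: cE'; exact: cE.
- move=> a f g cf cg x Bx.
  rewrite -lE' //; [|exact: cE|exact: cE].
  apply: wd' => //; first by apply: cE; exact: cont_on_lin.
    by apply: cont_on_lin; exact: cE.
  by move=> y Ay; exact: lE.
- exists (M' * M) => f cf c c0 hc x Bx.
  rewrite -mulrA; apply: HM' => //; first exact: cE.
    exact: mulr_ge0.
  by move=> y Ay; exact: HM.
- by move=> f cf x Fx; rewrite (rE' _ (cE f cf) x (FA x Fx)); exact: rE.
Qed.

Definition stepop (F : set T) (n : nat) (E : (T -> R) -> (T -> R)) (g : T -> R) :=
  fun x => if pselect ((F `|` @CB_deriv T n.+1) x) then g x else E g x.

Lemma iso_of n x : CB_deriv n x -> ~ @CB_deriv T n.+1 x -> isolated_in (CB_deriv n) x.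
Proof. by move=> Dx nx; apply: contrapT => ni; apply: nx; split. Qed.

Lemma step_ext (F : set T) n (E : (T -> R) -> (T -> R)) :
  closed F -> extension_operator (CB_deriv n.+1) (CB_deriv n) E ->
  extension_operator (F `|` CB_deriv n.+1) (F `|` CB_deriv n) (stepop F n E).
Proof.
move=> cF hE; have [M [M0 HM]] := ext_nonneg hE.
case: hE => wd cE lE _ rE.
have sub : CB_deriv n.+1 `<=` F `|` @CB_deriv T n.+1 by move=> y; right.
have cr : forall g : T -> R, cont_on (F `|` CB_deriv n.+1) g -> cont_on (CB_deriv n.+1) g.
  move=> g; exact: (continuous_subspaceW (f:=g) sub).
have inD : forall x, (F `|` CB_deriv n) x -> ~ (F `|` @CB_deriv T n.+1) x -> CB_deriv n x.
  by move=> x [Fx|//] nG; exfalso; apply: nG; left.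
split.
- move=> f g cf cg e x Gx; rewrite /stepop; case: pselect => G1x; first exact: e.
  apply: wd; [exact: cr|exact: cr| |exact: inD].
  by move=> y Dy; apply: e; right.
- move=> g cg; have cg' := cr g cg; have cEg := cE g cg'.
  apply/cont_onP => x Gx V nV.
  move/cont_onP: cg => cg; move/cont_onP: cEg => cEg.
  move: nV; rewrite /stepop; case: pselect => G1x nV.
  + have n1 := cg x G1x V nV.
    have [D1x|nD1x] := pselect (CB_deriv n.+1 x).
      have n2 : nbhs x (fun y => CB_deriv n y -> V (E g y)).
        by apply: (cEg x (CB_sub D1x) V); rewrite rE.
      apply: filterS2 n1 n2 => y h1 h2 Gy; case: pselect => G1y; first exact: h1.
      exact/h2/inD.
    have Fx : F x by case: (G1x) => // /nD1x.
    have [Dx|nDx] := pselect (CB_deriv n x).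
      case: (iso_of Dx nD1x) => _ [U [oU eU]].
      have Ux : U x by have : [set x] x by []; rewrite -eU => -[].
      have nU : nbhs x U by apply: open_nbhs_nbhs.
      apply: filterS2 n1 nU => y h1 Uy Gy; case: pselect => G1y; first exact: h1.
      have : (U `&` CB_deriv n) y by split => //; exact: inD.
      by rewrite eU => yx; exfalso; apply: G1y; rewrite yx.
    have nU : nbhs x (~` CB_deriv n).
      apply: open_nbhs_nbhs; split; last exact: nDx.
      exact: closed_openC (@CB_closed n).
    apply: filterS2 n1 nU => y h1 Uy Gy; case: pselect => G1y; first exact: h1.
    by exfalso; exact/Uy/inD.
  + have Dx := inD x Gx G1x.
    have nFx : ~ F x by move=> Fx; apply: (G1x); left.
    have nD1x : ~ CB_deriv n.+1 x by move=> D1x; apply: (G1x); right.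
    case: (iso_of Dx nD1x) => _ [U [oU eU]].
    have Ux : U x by have : [set x] x by []; rewrite -eU => -[].
    have nU : nbhs x U by apply: open_nbhs_nbhs.
    have nF : nbhs x (~` F) by apply: open_nbhs_nbhs; split => //; exact: closed_openC.
    apply: filterS2 nU nF => y Uy nFy Gy.
    have : (U `&` CB_deriv n) y by split => //; case: Gy.
    rewrite eU => yx; have -> : y = x by exact: yx.
    destruct (pselect _) as [h|h]; first by exfalso; apply: (G1x h).
    exact: nbhs_singleton nV.
- move=> a f g cf cg x Gx; rewrite /stepop; case: pselect => G1x //=.
  exact: (lE a f g (cr f cf) (cr g cg) x (inD x Gx G1x)).
- exists (Num.max M 1) => f cf c c0 hc x Gx; rewrite /stepop.
  case: pselect => G1x.
    apply: le_trans (hc x G1x) _.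
    by rewrite -[leLHS]mul1r ler_wpM2r // le_max lexx orbT.
  apply: le_trans (HM f (cr f cf) c c0 _ x (inD x Gx G1x)) _.
    by move=> y Dy; apply: hc; right.
  by rewrite ler_wpM2r // le_max lexx.
- by move=> f cf x G1x; rewrite /stepop; case: pselect.
Qed.

Fixpoint extfrom (Es : nat -> (T -> R) -> (T -> R)) (F : set T) (n k : nat)
  : (T -> R) -> (T -> R) :=
  match k with
  | O => fun f => f
  | k.+1 => fun f => stepop F n (Es n) (extfrom Es F n.+1 k f)
  end.

Lemma CB_mono m k : @CB_deriv T (m + k) `<=` CB_deriv m.
Proof.
elim: k => [|k IH]; first by rewrite addn0.
by rewrite addnS => x /CB_sub /IH.
Qed.

Lemma extfrom_ext (Es : nat -> (T -> R) -> (T -> R)) (F : set T) :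
  closed F -> (forall n, extension_operator (CB_deriv n.+1) (CB_deriv n) (Es n)) ->
  forall k n, extension_operator (F `|` CB_deriv (n + k)) (F `|` CB_deriv n)
                                 (extfrom Es F n k).
Proof.
move=> cF hEs; elim => [|k IH] n /=; first by rewrite addn0; exact: ext_id.
apply: (@ext_comp _ (F `|` CB_deriv n.+1)); last exact: step_ext.
- move=> x [Fx|Dx]; [by left|right].
  by move: Dx; rewrite addnS -addSn => /CB_mono.
- by rewrite addnS -addSn; exact: IH.
Qed.
End S.

Theorem corollary3p11 (R : realType) (K : topologicalType) :
  hausdorff_space K -> compact [set: K] -> scattered K -> finite_height K ->
  (forall n : nat, has_extension_operator R (@CB_deriv K n.+1) (@CB_deriv K n)) ->
  extension_property R K.
Proof.
move=> _ _ _ [h Dh] hE F cF _.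
have [Es hEs] := choice hE.
exists (extfrom Es F 0 h).
have := extfrom_ext cF hEs h 0.
by rewrite add0n Dh setU0 /= setUT.
Qed.
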